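(* Let $\beta$ be an ordered partition of $N$. The set $X^\beta=\{t_\eta w: w\in\bar W^\beta,\ \eta\in\bar P_-(w)\}\subseteq W$ is a complete set of representatives of the double coset space $\bar W\backslash W/\bar W_\beta$. Moreover $X^\beta\subseteq W^\beta$.
   Context: Fix $N\ge2$. $\bar P=\bigoplus_{i=1}^N\mathbb Z\epsilon_i$ with $(\epsilon_i,\epsilon_j)=\delta_{ij}$; $\bar R=\{\alpha_{ij}=\epsilon_i-\epsilon_j:i\ne j\}$, $\bar R_+=\{\alpha_{ij}:i<j\}$, $\alpha_i=\alpha_{i,i+1}$; $\bar P_-=\{\eta\in\bar P:(\eta,\alpha)\le0\ \forall\alpha\in\bar R_+\}$. $\bar W=\mathfrak S_N$ acts by permuting indices; $W=\bar W\ltimes\bar P$ with elements $wt_\eta$, $wt_\eta w^{-1}=t_{w(\eta)}$. Affine roots (with formal $\delta$): $R=\{\bar\alpha+k\delta\}$, $R_+=\{\bar\alpha+k\delta:\bar\alpha\in\bar R_+,k\ge0\}\cup\{-\bar\alpha+k\delta:\bar\alpha\in\bar R_+,k>0\}$, $R_-=R\setminus R_+$; $W$ acts on $R$ by $w(\bar\alpha+k\delta)=w(\bar\alpha)+k\delta$, $t_\eta(\bar\alpha+k\delta)=\bar\alpha+(k-(\eta,\bar\alpha))\delta$; $l(w)=\#(R_+\cap w^{-1}(R_-))$. An ordered partition $\beta$ of $N$ gives blocks of consecutive indices of sizes $\beta_1,\dots,\beta_r$; $\bar R_\beta=\{\alpha_{ij}:i,j\text{ in the same block}\}$, $\bar R_{\beta,+}=\bar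 R_\beta\cap\bar R_+$, $\bar W_\beta$ the subgroup generated by $s_{\alpha_i}$, $\alpha_i\in\bar R_\beta$; $W^\beta=\{w\in W:l(wu)\ge l(w)\ \forall u\in\bar W_\beta\}$, $\bar W^\beta=W^\beta\cap\bar W$. For $w\in\bar W^\beta$, $\eta_w\in\bar P_-$ is defined by $(\eta_w,\epsilon_1)=0$ and $(\eta_w,\alpha_i)=-1$ if $\alpha_i\in w(\bar R_+\setminus\bar R_{\beta,+})$, $0$ otherwise ($1\le i\le N-1$); $\bar P_-(w)=\{\eta+\eta_w:\eta\in\bar P_-\}$. *)

(* Defs.v *)
From mathcomp Require Import all_boot all_order fingroup perm all_algebra.
Set Implicit Arguments. Unset Strict Implicit. Unset Printing Implicit Defensive.
Import GRing.Theory Num.Theory.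

(* Elements of W: a pair (w, eta) stands for the element  w t_eta.
   A permutation w acts on indices; w(eps_i) = eps_(w i), so
   (w eta)_j = eta_(w^-1 j). *)
Definition Wt (N : nat) := ({perm 'I_N} * {ffun 'I_N -> int})%type.

(* (w1 t_e1)(w2 t_e2) = (w1 o w2) t_(w2^-1 e1 + e2);
   note: in mathcomp, (s * t)%g x = t (s x), so w1 o w2 = (w2 * w1)%g. *)
Definition mulW N (x y : Wt N) : Wt N :=
  ((y.1 * x.1)%g, [ffun j => (x.2 (y.1 j) + y.2 j)%R]).

Definition embW N (w : {perm 'I_N}) : Wt N := (w, [ffun => 0%R]).

(* t_eta w = w t_(w^-1 eta) *)
Definition tw N (eta : {ffun 'I_N -> int}) (w : {perm 'I_N}) : Wt N :=
  (w, [ffun j => eta (w j)]).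

(* Affine roots: (i, j, k) with i != j stands for eps_i - eps_j + k delta. *)
Definition aroot N := ('I_N * 'I_N * int)%type.

Definition is_root N (a : aroot N) : bool := a.1.1 != a.1.2.

Definition pos_root N (a : aroot N) : bool :=
  is_root a && (((a.1.1 < a.1.2)%N && (0 <= a.2)%R) ||
                ((a.1.2 < a.1.1)%N && (0 < a.2)%R)).

(* action of w t_eta: t_eta(alpha_ij + k delta) = alpha_ij + (k - (eta_i - eta_j)) delta,
   then w(alpha_ij + k delta) = alpha_(w i, w j) + k delta *)
Definition actW N (x : Wt N) (a : aroot N) : aroot N :=
  (x.1 a.1.1, x.1 a.1.2, (a.2 - (x.2 a.1.1 - x.2 a.1.2))%R).

Definition inv_root N (x : Wt N) (a : aroot N) : bool :=
  pos_root a && ~~ pos_root (actW x a).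

Definition is_length N (x : Wt N) (n : nat) : Prop :=
  exists s : seq (aroot N),
    [/\ uniq s, forall a, (a \in s) = inv_root x a & size s = n].

Definition le_length N (x y : Wt N) : Prop :=
  exists n m, [/\ is_length x n, is_length y m & (n <= m)%N].

(* Ordered partition beta = [b_1; ...; b_r] of N: blocks of consecutive indices.
   block beta i = index (0-based) of the block containing the (0-based) index i. *)
Definition block (beta : seq nat) (i : nat) : nat :=
  find (fun s => (i < s)%N) (scanl addn 0 beta).

Definition same_block (beta : seq nat) (i j : nat) : bool :=
  block beta i == block beta j.

Definition ordered_partition (N : nat) (beta : seq nat) : Prop :=
  all (fun b => (0 < b)%N) beta /\ sumn beta = N.

Definition Wbar_beta N (beta : seq nat) : {set {perm 'I_N}} :=
  <<[set tperm p.1 p.2 | p : 'I_N * 'I_N &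
       (val p.2 == (val p.1).+1) && same_block beta p.1 p.2]>>%g.

Definition in_Wbeta N (beta : seq nat) (x : Wt N) : Prop :=
  forall u, u \in Wbar_beta N beta -> le_length x (mulW x (embW u)).

Definition in_Wbar_beta_min N (beta : seq nat) (w : {perm 'I_N}) : Prop :=
  in_Wbeta beta (embW w).

Definition antidominant N (eta : {ffun 'I_N -> int}) : Prop :=
  forall i j : 'I_N, (i < j)%N -> (eta i - eta j <= 0)%R.

(* alpha_i (i.e. alpha_(i,i+1)) lies in w(R-bar_+ \ R-bar_(beta,+)) *)
Definition simple_in_image N (beta : seq nat) (w : {perm 'I_N}) (i i1 : 'I_N) : bool :=
  [exists a : 'I_N, exists b : 'I_N,
     [&& (a < b)%N, ~~ same_block beta a b, w a == i & w b == i1]].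

(* e = eta_w : (e, eps_1) = 0 and (e, alpha_i) = -1 or 0 as prescribed *)
Definition is_eta_w N (beta : seq nat) (w : {perm 'I_N}) (e : {ffun 'I_N -> int}) : Prop :=
  antidominant e /\
  (forall i : 'I_N, val i = 0%N -> e i = 0%R) /\
  (forall i i1 : 'I_N, val i1 = (val i).+1 ->
     (e i - e i1)%R = (if simple_in_image beta w i i1 then (-1)%R else 0%R)).

Definition in_Pminus_w N (beta : seq nat) (w : {perm 'I_N}) (eta : {ffun 'I_N -> int}) : Prop :=
  exists e, is_eta_w beta w e /\ antidominant [ffun j => (eta j - e j)%R].

Definition in_Xbeta N (beta : seq nat) (y : Wt N) : Prop :=
  exists w eta, [/\ in_Wbar_beta_min beta w, in_Pminus_w beta w eta & y = tw eta w].

Definition in_dcoset N (beta : seq nat) (x y : Wt N) : Prop :=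
  exists v u, u \in Wbar_beta N beta /\ x = mulW (embW v) (mulW y (embW u)).

(* Main.v *)
Require Import Defs.
From mathcomp Require Import all_boot all_order fingroup perm all_algebra.
From mathcomp Require Import zify.
Set Implicit Arguments. Unset Strict Implicit. Unset Printing Implicit Defensive.
Import GRing.Theory Num.Theory.

Section S.
Variable N : nat.
Variable beta : seq nat.
Local Notation blk := (block beta).

Lemma block_mono i j : i <= j -> blk i <= blk j.
Proof. move=> hij; rewrite /block; apply: sub_find => s /=; lia. Qed.

Lemma block_lt i j : blk i < blk j -> i < j.
Proof. move=> h; rewrite ltnNge; apply/negP => /block_mono; lia. Qed.

Lemma Wbar_block u : u \in Wbar_beta N beta -> forall k, blk (u k) = blk k.
Proof.
move=> /gen_prodgP [n [c Hc ->]].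
apply: (big_ind (fun u : {perm 'I_N} => forall k, blk (u k) = blk k)).
- by move=> k; rewrite perm1.
- by move=> x y hx hy k; rewrite permM hy hx.
move=> i _ k; move: (Hc i) => /imsetP [[p q] /=]; rewrite inE /= => /andP [_ hs] ->.
rewrite /same_block in hs; move/eqP: hs => hs.
by case: tpermP => [->|->|].
Qed.

Lemma gen_in (p q : 'I_N) : val q = (val p).+1 -> same_block beta p q ->
  tperm p q \in Wbar_beta N beta.
Proof.
move=> hq hs; apply: mem_gen; apply/imsetP; exists (p, q) => //.
by rewrite inE /= hs andbT hq.
Qed.

Lemma fin_enum (P : pred (aroot N)) (B : nat) :
  (forall a, P a -> (0 <= a.2)%R /\ (a.2 <= Posz B)%R) ->
  exists s, uniq s /\ forall a, (a \in s) = P a.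
Proof.
move=> hB.
pose f (p : 'I_N * 'I_N * 'I_B.+1) : aroot N := (p.1.1, p.1.2, Posz (val p.2)).
have fi : injective f.
  move=> [[a b] c] [[a' b'] c'] /= [-> -> h]; congr (_, _, _); apply: val_inj => /=; lia.
exists (filter P (map f (enum {: 'I_N * 'I_N * 'I_B.+1}))); split.
  by rewrite filter_uniq // map_inj_uniq // enum_uniq.
move=> [[i j] k]; rewrite mem_filter; case Pa: (P _) => //=.
have [h0 h1] := hB _ Pa; move: h0 h1 => /= h0 h1.
have hk : absz k < B.+1 by lia.
apply/mapP; exists (i, j, Ordinal hk); first by rewrite mem_enum.
rewrite /f /=; congr (_, _, _); lia.
Qed.

Lemma inv_bound (x : Wt N) a : inv_root x a ->
  (0 <= a.2)%R /\ (a.2 <= x.2 a.1.1 - x.2 a.1.2)%R.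
Proof.
case: a => [[i j] k]; rewrite /inv_root /pos_root /is_root /actW /=.
move=> /andP [/andP [hij h1] h2].
have hne : x.1 i != x.1 j by rewrite (inj_eq (@perm_inj _ _)).
rewrite hne /= in h2.
move: h1 h2 hne; move: (x.1 i) (x.1 j) => p q hpq1 hpq2 /negP hpq.
have hv : nat_of_ord p != nat_of_ord q by apply/negP => /eqP /val_inj /eqP.
move: hpq1 hpq2 hv; move: (nat_of_ord p) (nat_of_ord q) (nat_of_ord i) (nat_of_ord j) (x.2 i) (x.2 j) => p' q' i' j' xi xj.
lia.
Qed.

Lemma len_ex (x : Wt N) : exists s, uniq s /\ forall a, (a \in s) = inv_root x a.
Proof.
apply: (@fin_enum _ (\max_(i : 'I_N) \max_(j : 'I_N) absz (x.2 i - x.2 j)%R)).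
move=> a ha; have [h0 h1] := inv_bound ha; split => //.
have h2 : absz (x.2 a.1.1 - x.2 a.1.2)%R <= \max_(i : 'I_N) \max_(j : 'I_N) absz (x.2 i - x.2 j)%R.
  apply: leq_trans (@leq_bigmax _ (fun i => \max_(j : 'I_N) absz (x.2 i - x.2 j)%R) a.1.1).
  exact: (@leq_bigmax _ (fun j => absz (x.2 a.1.1 - x.2 j)%R) a.1.2).
move: h0 h1 h2; move: (\max_(i : 'I_N) \max_(j : 'I_N) absz (x.2 i - x.2 j)%R) => B.
case: a ha => [[i j] k] /= _; move: (x.2 i) (x.2 j) => xi xj; lia.
Qed.

Lemma le_len_inj (x y : Wt N) (f : aroot N -> aroot N) : injective f ->
  (forall a, inv_root x a -> inv_root y (f a)) -> le_length x y.
Proof.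
move=> fi hf. have [s [us hs]] := len_ex x. have [t [ut ht]] := len_ex y.
exists (size s), (size t); split; [by exists s | by exists t | ].
rewrite -(size_map f).
apply: uniq_leq_size; first by rewrite map_inj_uniq.
move=> b /mapP [a ha ->]; rewrite ht; apply: hf; by rewrite -hs.
Qed.

Lemma len_strict (x y : Wt N) (g : aroot N -> aroot N) (a0 : aroot N) : injective g ->
  (forall a, inv_root y a -> inv_root x (g a)) -> inv_root x a0 ->
  (forall a, inv_root y a -> g a != a0) -> ~ le_length x y.
Proof.
move=> gi hg ha0 hne [n [m [[s [us hs <-]] [t [ut ht <-]] hnm]]].
have : size (a0 :: map g t) <= size s.
  apply: uniq_leq_size.
    rewrite /= map_inj_uniq // ut andbT; apply/mapP => [[a ha]] /esym/eqP.
    by rewrite (negbTE (hne a _)) // -ht.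
  move=> b; rewrite inE => /orP [/eqP -> | /mapP [a ha ->]]; rewrite hs //.
  by apply: hg; rewrite -ht.
rewrite /= size_map; lia.
Qed.


Definition incb (w : {perm 'I_N}) (mu : {ffun 'I_N -> int}) :=
  forall a b : 'I_N, a < b -> same_block beta a b -> w a < w b /\ (mu a <= mu b)%R.

Lemma ord_neq (p q : 'I_N) : (p != q) = (nat_of_ord p != nat_of_ord q).
Proof. by []. Qed.

Lemma minW w mu : incb w mu -> in_Wbeta beta (w, mu).
Proof.
move=> H u hu.
have hb : forall k, blk ((u^-1)%g k) = blk k by apply: Wbar_block; rewrite groupV.
apply: (@le_len_inj _ _ (fun a => ((u^-1)%g a.1.1, (u^-1)%g a.1.2, a.2))).
  by move=> [[i j] k] [[i' j'] k'] /= [/perm_inj -> /perm_inj -> ->].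
move=> [[i j] k]; rewrite /inv_root /= => /andP [hp hn].
have -> : actW (mulW (w, mu) (embW u)) ((u^-1)%g i, (u^-1)%g j, k) = actW (w, mu) (i, j, k).
  by rewrite /actW /mulW /embW /= !permM !permKV !ffunE !addr0 !permKV.
apply/andP; split => //.
move: hp hn; rewrite /pos_root /is_root /actW /= !ord_neq.
have hne : ((u^-1)%g i != (u^-1)%g j) = (i != j) by rewrite (inj_eq (@perm_inj _ _)).
rewrite ord_neq in hne; rewrite hne.
have hbm := @block_mono i j; have hbm' := @block_lt ((u^-1)%g i) ((u^-1)%g j).
rewrite !hb in hbm'.
case: (ltngtP i j) => hij; last by move=> /andP [].
- have hneq : (u^-1)%g i != (u^-1)%g j.
    by rewrite (inj_eq (@perm_inj _ _)) neq_ltn hij.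
  rewrite ord_neq in hneq.
  case: (ltngtP (blk i) (blk j)) => hbl.
  + by have := hbm' hbl; lia.
  + by have := hbm (ltnW hij); lia.
  + have [hw hm] := H i j hij (introT eqP hbl).
    move: hm hw; move: (mu i) (mu j) => mi mj; lia.
- have hneq : (u^-1)%g i != (u^-1)%g j.
    by rewrite (inj_eq (@perm_inj _ _)) neq_ltn hij orbT.
  rewrite ord_neq in hneq.
  lia.
Qed.

Ltac onat := repeat match goal with
 | H : is_true (?p != ?q) |- _ => move: H; rewrite -(inj_eq val_inj) /= => H
 end.

Lemma ord_chain (P : 'I_N -> Prop) (i : 'I_N) : P i ->
  (forall j j1 : 'I_N, nat_of_ord j1 = (nat_of_ord j).+1 -> i <= j -> P j -> P j1) ->
  forall j : 'I_N, i <= j -> P j.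
Proof.
move=> Pi step j hij.
have [d hd] : exists d, nat_of_ord j = nat_of_ord i + d by exists (nat_of_ord j - nat_of_ord i); lia.
elim: d j hd {hij} => [|d IH] j hd.
  by have -> : j = i by apply: val_inj; rewrite /= hd addn0.
have hlt : nat_of_ord i + d < N by have := ltn_ord j; lia.
apply: (step (Ordinal hlt)) => /=; [lia | lia | apply: IH => /=; done].
Qed.

Lemma min_consec w : in_Wbar_beta_min beta w ->
  forall a a1 : 'I_N, nat_of_ord a1 = (nat_of_ord a).+1 -> same_block beta a a1 -> w a < w a1.
Proof.
move=> Hm a a1 ha1 hs; rewrite ltnNge leq_eqVlt; apply/negP => /orP [/eqP /val_inj|hw].
  by move/perm_inj => e; move: ha1; rewrite e; lia.
set s := tperm a a1.
have hsin : s \in Wbar_beta N beta by apply: gen_in.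
apply: (@len_strict _ _ (fun b => (s b.1.1, s b.1.2, b.2)) (a, a1, 0%R) _ _ _ _ (Hm s hsin)).
- by move=> [[i j] k] [[i' j'] k'] /= [/perm_inj -> /perm_inj -> ->].
- move=> [[i j] k]; rewrite /inv_root /= => /andP [hp hn].
  have e : actW (mulW (embW w) (embW s)) (i, j, k) = actW (embW w) (s i, s j, k).
    by rewrite /actW /mulW /embW /= !permM !ffunE !addr0.
  rewrite e in hn; rewrite hn andbT.
  move: hp hn; rewrite /pos_root /is_root /actW /= !ffunE !subrr !subr0.
  rewrite -!(inj_eq val_inj) /=.
  have ha : nat_of_ord a != nat_of_ord a1 by lia.
  rewrite /s; case: (tpermP a a1 i) => [->|->|/eqP hia /eqP hia1];
    case: (tpermP a a1 j) => [->|->|/eqP hja /eqP hja1]; onat; lia.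
- rewrite /inv_root /pos_root /is_root /actW /= ?ffunE ?subrr.
  rewrite -!(inj_eq val_inj) /=.
  have ha : nat_of_ord a != nat_of_ord a1 by lia.
  have hwn : nat_of_ord (w a) != nat_of_ord (w a1) by lia.
  rewrite ha hwn /=; lia.
- move=> [[i j] k] /andP [hp _]; apply/negP => /eqP [hi hj hk].
  have ei : i = a1 by rewrite -(tpermK a a1 i) -/s hi tpermL.
  have ej : j = a by rewrite -(tpermK a a1 j) -/s hj tpermR.
  move: hp; rewrite ei ej hk /pos_root /is_root /= ord_neq; lia.
Qed.

Lemma min_inc w : in_Wbar_beta_min beta w ->
  forall a b : 'I_N, a < b -> same_block beta a b -> w a < w b.
Proof.
move=> Hm a b hab; have hc := min_consec Hm.
rewrite /same_block => /eqP hbl.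
suff H : forall j : 'I_N, a <= j -> a < j -> blk a = blk j -> w a < w j.
  by apply: H => //; apply: ltnW.
apply: (@ord_chain (fun j => a < j -> blk a = blk j -> w a < w j)).
  by rewrite ltnn.
move=> j j1 hj1 haj IH haj1 hbl1.
have hbj : blk j = blk a.
  have := @block_mono a j haj; have := @block_mono j j1 ltac:(lia); lia.
have hw := hc j j1 hj1 (introT eqP (etrans hbj hbl1)).
case: (ltngtP a j) => h.
- by have := IH h (esym hbj); lia.
- lia.
- by have -> : a = j by apply: val_inj.
Qed.

Lemma pminus_mono w (eta : {ffun 'I_N -> int}) : in_Pminus_w beta w eta ->
  forall i j : 'I_N, i <= j -> (eta i <= eta j)%R.
Proof.
move=> [e [[he _] hd]] i j; rewrite leq_eqVlt => /orP [/eqP/val_inj -> //|hij].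
have := he i j hij; have := hd i j hij; rewrite !ffunE.
move: (eta i) (eta j) (e i) (e j) => a b c d; lia.
Qed.

Lemma X_in_Wbeta (y : Wt N) : in_Xbeta beta y -> in_Wbeta beta y.
Proof.
move=> [w [eta [hm hp ->]]]; rewrite /tw; apply: minW => a b hab hs.
split; first exact: min_inc hm a b hab hs.
rewrite !ffunE; apply: (pminus_mono hp); apply: ltnW; exact: min_inc hm a b hab hs.
Qed.

Lemma enum_sorted (T : Type) (r : rel T) (g : 'I_N -> T) :
  (forall i j : 'I_N, i <= j -> r (g i) (g j)) -> sorted r (map g (enum 'I_N)).
Proof.
move=> hg; rewrite sorted_map.
have h : sorted (relpre (@nat_of_ord N) leq) (enum 'I_N).
  by rewrite -sorted_map val_enum_ord iota_sorted.
by apply: sub_sorted h => i j /=; apply: hg.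
Qed.

Lemma perm_enum_map (p : {perm 'I_N}) : perm_eq (map p (enum 'I_N)) (enum 'I_N).
Proof.
have pi : injective p by apply: perm_inj.
apply: uniq_perm; [by rewrite map_inj_uniq ?enum_uniq | exact: enum_uniq | ].
move=> x; rewrite mem_enum; apply/mapP; exists ((p^-1)%g x); first by rewrite mem_enum.
by rewrite permKV.
Qed.

Lemma sorted_perm_eq (T : eqType) (r : rel T) : transitive r -> antisymmetric r ->
  forall (f : 'I_N -> T) (p : {perm 'I_N}),
  (forall i j : 'I_N, i <= j -> r (f i) (f j)) ->
  (forall i j : 'I_N, i <= j -> r (f (p i)) (f (p j))) -> forall i, f (p i) = f i.
Proof.
move=> rt ra f p h1 h2 i.
have e : map (fun j => f (p j)) (enum 'I_N) = map f (enum 'I_N).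
  apply: (sorted_eq rt ra); [exact: enum_sorted | exact: enum_sorted | ].
  have := perm_map f (perm_enum_map p); rewrite -map_comp; exact.
have := (proj2 (eq_in_map _ _ _) e) i; rewrite mem_enum; exact.
Qed.

Definition keylt (g : 'I_N -> int) (a b : 'I_N) : bool :=
  (g a < g b)%R || ((g a == g b) && ((blk b < blk a) || ((blk a == blk b) && (a < b)))).

Lemma keylt_total g (a b : 'I_N) : a != b -> keylt g a b || keylt g b a.
Proof. rewrite /keylt => h; onat; move: (g a) (g b) => x y; lia. Qed.

Lemma keylt_asym g (a b : 'I_N) : keylt g a b -> keylt g b a -> False.
Proof. rewrite /keylt; move: (g a) (g b) => x y; lia. Qed.

Lemma keylt_irr g (a : 'I_N) : keylt g a a = false.
Proof. rewrite /keylt; move: (g a) => x; lia. Qed.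

Lemma keylt_trans g (a b c : 'I_N) : keylt g a b -> keylt g b c -> keylt g a c.
Proof. rewrite /keylt; move: (g a) (g b) (g c) => x y z; lia. Qed.

Lemma walk w (eta : {ffun 'I_N -> int}) : in_Pminus_w beta w eta ->
  forall p q : 'I_N, p <= q -> eta p = eta q -> blk ((w^-1)%g q) <= blk ((w^-1)%g p).
Proof.
move=> hp p; have hmono := pminus_mono hp.
have [e [[he [_ hst]] hd]] := hp.
apply: (@ord_chain (fun q => eta p = eta q -> blk ((w^-1)%g q) <= blk ((w^-1)%g p))) => //.
move=> j j1 hj1 hpj IH hpe.
have hej : eta j = eta p.
  have := hmono _ _ hpj; have := hmono j j1 ltac:(lia); rewrite -hpe.
  move: (eta j) (eta p) => x y; lia.
have {}IH := IH (esym hej).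
suff : blk ((w^-1)%g j1) <= blk ((w^-1)%g j) by lia.
have hs := hst j j1 hj1.
have hdj := hd j j1 ltac:(lia); rewrite !ffunE in hdj.
have nsim : ~~ simple_in_image beta w j j1.
  apply/negP => hsim; rewrite hsim in hs.
  move: hs hdj; rewrite -hpe hej; move: (e j) (e j1) (eta p) => x y z; lia.
set c := (w^-1)%g j; set d := (w^-1)%g j1.
have hcd : c != d by rewrite (inj_eq (@perm_inj _ _)) -(inj_eq val_inj) /=; lia.
case: (ltngtP c d) => hl.
- case: (ltngtP (blk c) (blk d)) => hb //.
  case/negP: nsim; apply/existsP; exists c; apply/existsP; exists d.
  rewrite hl /same_block /c /d !permKV !eqxx !andbT /=; move: hb; rewrite /c /d; lia.
- exact: block_mono (ltnW hl).
- by move: hcd; rewrite -(inj_eq val_inj) /= hl eqxx.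
Qed.

Lemma keymono w (eta : {ffun 'I_N -> int}) : in_Wbar_beta_min beta w ->
  in_Pminus_w beta w eta -> forall a b : 'I_N, keylt (fun j => eta (w j)) a b -> w a < w b.
Proof.
move=> hm hp a b hk; rewrite ltnNge; apply/negP => hba.
have hmono := pminus_mono hp.
move: hk; rewrite /keylt => /orP [hlt|/andP [/eqP heq /orP [hbl|/andP [/eqP hbl hab]]]].
- have := hmono _ _ hba; move: hlt; move: (eta (w a)) (eta (w b)) => x y; lia.
- have := walk hp hba (esym heq); rewrite !permK; lia.
- have := min_inc hm hab (introT eqP hbl); lia.
Qed.

Definition lexr (x y : nat * int) : bool := (x.1 < y.1) || ((x.1 == y.1) && (x.2 <= y.2)%R).

Lemma lexr_trans : transitive lexr.
Proof. move=> [a b] [c d] [e f]; rewrite /lexr /=; lia. Qed.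

Lemma lexr_anti : antisymmetric lexr.
Proof.
move=> [a b] [c d]; rewrite /lexr /= => h.
have [-> ->] : a = c /\ b = d by lia.
by [].
Qed.

Lemma mu_mono w (eta : {ffun 'I_N -> int}) : in_Wbar_beta_min beta w ->
  in_Pminus_w beta w eta -> forall i j : 'I_N, i <= j ->
  lexr (blk i, eta (w i)) (blk j, eta (w j)).
Proof.
move=> hm hp i j hij; rewrite /lexr /=.
case: (ltngtP (blk i) (blk j)) => hb //=.
  by have := block_mono hij; lia.
case: (ltngtP i j) => h.
- apply: (pminus_mono hp); apply: ltnW; apply: (min_inc hm h); exact/eqP.
- lia.
- by have -> : i = j by apply: val_inj.
Qed.

Lemma part2 (y y' : Wt N) : in_Xbeta beta y -> in_Xbeta beta y' ->
  in_dcoset beta y' y -> y = y'.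
Proof.
move=> [w [eta [hm hp ->]]] [w' [eta' [hm' hp' ->]]] [v [u [hu e]]].
have hb := Wbar_block hu.
have hmu : forall j, eta' (w' j) = eta (w (u j)).
  move=> j; have := congr1 (fun z : Wt N => z.2 j) e.
  by rewrite /tw /mulW /embW /= !ffunE add0r addr0.
have hw' : w' = (u * w * v)%g by have := congr1 (fun z : Wt N => z.1) e.
have step1 : forall j, eta (w (u j)) = eta (w j).
  move=> j.
  have h : (blk (u j), eta (w (u j))) = (blk j, eta (w j)).
    apply: (@sorted_perm_eq _ lexr lexr_trans lexr_anti (fun j => (blk j, eta (w j))) u
      (mu_mono hm hp)).
    move=> i k hik; rewrite /= !hb -!hmu; exact: mu_mono hm' hp' i k hik.
  by case: h.
have hkey : forall a b, keylt (fun j => eta' (w' j)) a b = keylt (fun j => eta (w j)) a b.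
  by move=> a b; rewrite /keylt !hmu !step1.
have tau_mono : forall p q : 'I_N, p <= q -> w' ((w^-1)%g p) <= w' ((w^-1)%g q).
  move=> p q; rewrite leq_eqVlt => /orP [/eqP /val_inj -> //|hpq].
  have hne : (w^-1)%g p != (w^-1)%g q.
    by rewrite (inj_eq (@perm_inj _ _)) -(inj_eq val_inj) /=; lia.
  case/orP: (keylt_total (fun j => eta (w j)) hne) => hk.
    by apply: ltnW; apply: (keymono hm' hp'); rewrite hkey.
  by have := keymono hm hp hk; rewrite !permKV; lia.
have htau : forall p : 'I_N, nat_of_ord (w' ((w^-1)%g p)) = p.
  move=> p.
  have := @sorted_perm_eq _ leq leq_trans anti_leq (@nat_of_ord N) ((w^-1 * w')%g)
    (fun i j h => h) _ p.
  rewrite permM; apply => i j hij; rewrite !permM; exact: tau_mono.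
have ew : w' = w.
  apply/permP => a; apply: val_inj => /=.
  by have := htau (w a); rewrite permK.
clear hw'; subst w'; congr (_, _); apply/ffunP => j; rewrite !ffunE hmu step1 //.
Qed.

Lemma seq_max0 (T : eqType) (F : T -> int) (s : seq T) z :
  exists2 m, m \in z :: s & forall y, y \in z :: s -> (F y <= F m)%R.
Proof.
elim: s z => [|z' s IH] z.
  by exists z => [|y]; rewrite ?inE // => /eqP ->.
have [m hm hmax] := IH z'.
case: (lerP (F z) (F m)) => hz.
  exists m; first by rewrite inE hm orbT.
  by move=> y; rewrite inE => /orP [/eqP ->|/hmax].
exists z; first by rewrite inE eqxx.
move=> y; rewrite inE => /orP [/eqP -> //|/hmax h]; move: h hz.
move: (F y) (F m) (F z) => a b c; lia.
Qed.

Lemma seq_max (T : eqType) (F : T -> int) (s : seq T) x0 : x0 \in s ->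
  exists2 m, m \in s & forall y, y \in s -> (F y <= F m)%R.
Proof. by case: s => [//|z s] _; apply: seq_max0. Qed.

Lemma blk_chain (f : 'I_N -> int) :
  (forall a a1 : 'I_N, nat_of_ord a1 = (nat_of_ord a).+1 -> same_block beta a a1 -> (f a <= f a1)%R) ->
  forall a b : 'I_N, a <= b -> blk a = blk b -> (f a <= f b)%R.
Proof.
move=> hc a b hab hbl; move: b hab hbl.
apply: (@ord_chain (fun j => blk a = blk j -> (f a <= f j)%R)) => //.
move=> j j1 hj1 haj IH hbl1.
have hbj : blk j = blk a.
  have := @block_mono a j haj; have := @block_mono j j1 ltac:(lia); lia.
have hw := hc j j1 hj1 (introT eqP (etrans hbj hbl1)).
have := IH (esym hbj); move: hw; move: (f a) (f j) (f j1) => x y z; lia.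
Qed.

Lemma sort_perm (g : 'I_N -> int) :
  exists w : {perm 'I_N}, forall a b, keylt g a b -> w a < w b.
Proof.
pose le := fun a b : 'I_N => (a == b) || keylt g a b.
have tot : total le.
  move=> a b; rewrite /le; case: (eqVneq a b) => [//|hne] /=.
  exact: keylt_total.
have tr : transitive le.
  move=> b a c; rewrite /le => /orP [/eqP ->//|hab] /orP [/eqP <-|hbc].
    by rewrite hab orbT.
  by rewrite (keylt_trans hab hbc) orbT.
have rf : reflexive le by move=> a; rewrite /le eqxx.
pose s := sort le (enum 'I_N).
have hsz : size s = N by rewrite size_sort size_enum_ord.
have hu : uniq s by rewrite sort_uniq enum_uniq.
have hso : sorted le s by apply: sort_sorted.
pose rho := fun p : 'I_N => nth p s p.
have rhoE : forall x0 (p : 'I_N), rho p = nth x0 s p.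
  by move=> x0 p; rewrite /rho (set_nth_default x0) // hsz ltn_ord.
have rinj : injective rho.
  move=> p q; rewrite (rhoE p q) (rhoE p p) => /eqP.
  by rewrite nth_uniq ?hsz ?ltn_ord // => /eqP /val_inj.
pose rp := perm rinj.
exists (rp^-1)%g => a b hab.
rewrite ltnNge; apply/negP => hle.
have hin : forall p : 'I_N, nat_of_ord p \in [pred n | n < size s].
  by move=> p; rewrite inE /= hsz ltn_ord.
have := sorted_leq_nth tr rf a hso _ _ (hin _) (hin _) hle.
have hr : forall x0 (p : 'I_N), nth x0 s p = rp p by move=> x0 p; rewrite permE -rhoE.
rewrite !hr !permKV /le => /orP [/eqP hba|hba].
  by move: hab; rewrite hba keylt_irr.
exact: keylt_asym hab hba.
Qed.

Lemma sum3 (G : 'I_N -> int) (a a1 : 'I_N) : a1 != a ->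
  (\sum_(j : 'I_N) G j = G a + G a1 + \sum_(j : 'I_N | (j != a) && (j != a1)) G j)%R.
Proof. by move=> hne; rewrite (bigD1 a) // (bigD1 a1) //= addrA. Qed.

Lemma phi_swap (nu : {ffun 'I_N -> int}) (h : {perm 'I_N}) (a a1 : 'I_N) :
  nat_of_ord a1 = (nat_of_ord a).+1 -> (nu (h a1) < nu (h a))%R ->
  (\sum_(j : 'I_N) Posz j * nu (h j) < \sum_(j : 'I_N) Posz j * nu ((tperm a a1 * h)%g j))%R.
Proof.
move=> ha1 hlt.
have hne : a1 != a by rewrite -(inj_eq val_inj) /=; lia.
rewrite !(sum3 _ hne).
rewrite [X in (_ < _ + X)%R](eq_bigr (fun j : 'I_N => Posz j * nu (h j))%R); last first.
  move=> j /andP [h1 h2]; rewrite permM tpermD // eq_sym //.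
rewrite !permM tpermL tpermR.
move: hlt; rewrite ha1; move: (nu (h a)) (nu (h a1)) (\sum_(i | _) _)%R => x y z.
nia.
Qed.

Lemma pminus_build w (eta : {ffun 'I_N -> int}) :
  (forall p q : 'I_N, p <= q -> (eta p <= eta q)%R) ->
  (forall p p1 : 'I_N, nat_of_ord p1 = (nat_of_ord p).+1 ->
     simple_in_image beta w p p1 -> (eta p < eta p1)%R) ->
  in_Pminus_w beta w eta.
Proof.
move=> H1 H2.
pose bq := fun q : nat => nat_of_bool [exists i : 'I_N, exists i1 : 'I_N,
  [&& nat_of_ord i == q, nat_of_ord i1 == q.+1 & simple_in_image beta w i i1]].
pose e := [ffun p : 'I_N => Posz (\sum_(0 <= q < nat_of_ord p) bq q)].
have estep : forall j j1 : 'I_N, nat_of_ord j1 = (nat_of_ord j).+1 ->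
    e j1 = (e j + Posz (nat_of_bool (simple_in_image beta w j j1)))%R.
  move=> j j1 hj1; rewrite !ffunE hj1 big_nat_recr //= PoszD; congr (_ + Posz (nat_of_bool _))%R.
  apply/existsP/idP => [[i /existsP [i1 /and3P [/eqP h1 /eqP h2 hs]]]|hs].
    have -> : j = i by apply: val_inj => /=; rewrite h1.
    by have -> : j1 = i1 by apply: val_inj => /=; rewrite h2.
  by exists j; apply/existsP; exists j1; rewrite hs eqxx hj1 eqxx.
have emono : forall i j : 'I_N, i <= j -> (e i <= e j)%R.
  move=> i j hij; rewrite !ffunE.
  rewrite (@big_cat_nat _ _ _ i 0 j) //= PoszD.
  move: (\sum_(0 <= q < i) bq q) (\sum_(i <= q < j) bq q) => x y; lia.
exists e; split; first split.
- move=> i j hij; have := emono i j (ltnW hij); move: (e i) (e j) => x y; lia.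
- split.
    by move=> i hi; rewrite ffunE hi big_geq.
  move=> i i1 hi1; rewrite (estep i i1 hi1).
  case: (simple_in_image beta w i i1) => /=; move: (e i) => x; lia.
- move=> i j hij.
  suff : ((eta i - e i) <= (eta j - e j))%R by rewrite !ffunE; move: (eta i - e i)%R (eta j - e j)%R => x y; lia.
  apply: (@ord_chain (fun j => ((eta i - e i) <= (eta j - e j))%R)) => //; last exact: ltnW.
  move=> j' j1 hj1 hij' IH.
  rewrite (estep j' j1 hj1).
  case hs: (simple_in_image beta w j' j1) => /=.
    have := H2 j' j1 hj1 hs; move: IH; move: (eta i - e i)%R (eta j') (eta j1) (e j') => x y z t; lia.
  have := H1 j' j1 ltac:(lia); move: IH; move: (eta i - e i)%R (eta j') (eta j1) (e j') => x y z t; lia.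
Qed.

Lemma part1 (x : Wt N) : exists y, in_Xbeta beta y /\ in_dcoset beta x y.
Proof.
case: x => [w0 nu].
pose Phi := fun h : {perm 'I_N} => (\sum_(j : 'I_N) Posz j * nu (h j))%R.
have [h hH hmax] := @seq_max _ Phi (enum (Wbar_beta N beta)) 1%g ltac:(by rewrite mem_enum group1).
rewrite mem_enum in hH.
pose mu := fun j => nu (h j).
have mu_cons : forall a a1 : 'I_N, nat_of_ord a1 = (nat_of_ord a).+1 ->
    same_block beta a a1 -> (mu a <= mu a1)%R.
  move=> a a1 ha1 hs; case: (lerP (mu a) (mu a1)) => // hlt; exfalso.
  have hin : (tperm a a1 * h)%g \in Wbar_beta N beta.
    by rewrite groupM // gen_in.
  have := hmax (tperm a a1 * h)%g ltac:(by rewrite mem_enum hin); have := phi_swap ha1 hlt; rewrite /Phi.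
  move: (\sum_(j : 'I_N) _)%R (\sum_(j : 'I_N) _)%R => s1 s2; lia.
have mu_blk := blk_chain mu_cons.
have [w hw] := sort_perm mu.
pose eta := [ffun p => mu ((w^-1)%g p)].
have winc : forall a b : 'I_N, a < b -> same_block beta a b -> w a < w b.
  move=> a b hab hs; apply: hw; rewrite /keylt.
  move: hs; rewrite /same_block => /eqP hs.
  have := mu_blk a b (ltnW hab) hs; move: (mu a) (mu b) => x y; lia.
have hmin : in_Wbar_beta_min beta w.
  rewrite /in_Wbar_beta_min /embW; apply: minW => a b hab hs.
  split; [exact: winc | ]. by rewrite (ffunE (fun _ : 'I_N => 0%R) a) (ffunE (fun _ : 'I_N => 0%R) b).
have hP : in_Pminus_w beta w eta.
  apply: pminus_build.
  - move=> p q hpq; rewrite !ffunE.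
    case: (eqVneq p q) => [->//|hne].
    have hne' : (w^-1)%g p != (w^-1)%g q by rewrite (inj_eq (@perm_inj _ _)).
    case/orP: (keylt_total mu hne') => hk.
      by move: hk; rewrite /keylt; move: (mu _) (mu _) => x y; lia.
    have := hw _ _ hk; rewrite !permKV; move: hne; rewrite -(inj_eq val_inj) /=; lia.
  - move=> p p1 hp1 /existsP [a /existsP [b /and4P [hab hs /eqP hwa /eqP hwb]]].
    rewrite !ffunE -hwa -hwb !permK.
    have hne : a != b by rewrite -(inj_eq val_inj) /=; lia.
    case/orP: (keylt_total mu hne) => hk.
      move: hk hs; rewrite /keylt /same_block.
      have := @block_mono a b (ltnW hab); move: (mu a) (mu b) => x y; lia.
    have := hw _ _ hk; rewrite hwa hwb; lia.
exists (tw eta w); split; first by exists w, eta.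
exists ((w^-1) * h * w0)%g, (h^-1)%g; split; first by rewrite groupV.
rewrite /mulW /embW /tw /=; congr (_, _).
  by rewrite !mulgA mulgK mulVg mul1g.
apply/ffunP => j; rewrite !ffunE add0r addr0 permK /mu permKV //.
Qed.

End S.

Theorem proposition2p13 (N : nat) (HN : (2 <= N)%N) (beta : seq nat)
  (Hbeta : ordered_partition N beta) :
  (* every double coset W-bar x W-bar_beta meets X^beta *)
  (forall x : Wt N, exists y, in_Xbeta beta y /\ in_dcoset beta x y) /\
  (* distinct elements of X^beta lie in distinct double cosets *)
  (forall y y' : Wt N, in_Xbeta beta y -> in_Xbeta beta y' ->
     in_dcoset beta y' y -> y = y') /\
  (* X^beta is contained in W^beta *)
  (forall y : Wt N, in_Xbeta beta y -> in_Wbeta beta y).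
Proof.
split; first exact: part1.
split; first exact: part2.
exact: X_in_Wbeta.
Qed.
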